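(* Let $M$ be a set of $5$ indivisible items. There exist strict monotone preferences $\preceq_1,\preceq_2$ over $2^M$ for two agents and a Pareto optimal allocation $\mathcal S=(S_1,S_2)$ such that for no budget profile $(b_1,b_2)$ with $b_1,b_2>0$ do there exist prices $p$ making $(\mathcal S,p)$ a competitive equilibrium.
   Context: A monotone preference $\preceq_i$ is a complete and transitive weak order over all subsets of $M$ such that $S\preceq_i T$ whenever $S\subseteq T$; it is strict if for any $S\ne T$ either $S\prec_i T$ or $T\prec_i S$ (where $S\prec_i T$ means $S\preceq_i T$ and not $T\preceq_i S$). An allocation is a partition $(S_1,S_2)$ of all items of $M$ between the agents. An allocation $\mathcal S$ is Pareto optimal if for every allocation $\mathcal S'\ne\mathcal S$ there is an agent $i$ with $S'_i\prec_i S_i$. Given item prices $p$ with $p(S)=\sum_{j\in S}p_j$, a bundle $S$ is demanded by agent $i$ with budget $b_i$ if $p(S)\le b_i$ and $p(T)>b_i$ for every $T$ with $S\prec_i T$. $(\mathcal S,p)$ is a competitive equilibrium if $S_i$ is demanded by agent $i$ at prices $p$ for each $i$. *)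

(* Defs.v *)
From HB Require Import structures.
From mathcomp Require Import all_boot all_order all_algebra.
Set Implicit Arguments. Unset Strict Implicit. Unset Printing Implicit Defensive.
Import Order.TTheory GRing.Theory Num.Theory.
Local Open Scope ring_scope.

(* A preference over bundles of items (subsets of the finite item type T):
   pref S T  means  S ⪯ T. *)
Definition pref (T : finType) := {set T} -> {set T} -> bool.

Section Defs.
Variable T : finType.

Definition spref (le : pref T) (S U : {set T}) : bool := le S U && ~~ le U S.

Definition complete_pref (le : pref T) : Prop := forall S U, le S U || le U S.
Definition transitive_pref (le : pref T) : Prop :=
  forall S U V, le S U -> le U V -> le S V.
Definition monotone_pref (le : pref T) : Prop :=
  complete_pref le /\ transitive_pref le /\ (forall S U : {set T}, S \subset U -> le S U).
Definition strict_pref (le : pref T) : Prop :=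
  forall S U, S != U -> spref le S U || spref le U S.

Definition allocation2 (A : {set T} * {set T}) : Prop :=
  [disjoint A.1 & A.2] /\ A.1 :|: A.2 = setT.

Definition pareto_optimal2 (le1 le2 : pref T) (A : {set T} * {set T}) : Prop :=
  allocation2 A /\
  forall A', allocation2 A' -> A' <> A -> spref le1 A'.1 A.1 \/ spref le2 A'.2 A.2.

Variable R : realFieldType.

Definition price (p : T -> R) (S : {set T}) : R := \sum_(j in S) p j.

Definition demanded (le : pref T) (b : R) (p : T -> R) (S : {set T}) : Prop :=
  price p S <= b /\ forall U, spref le S U -> b < price p U.

Definition competitive_eq2 (le1 le2 : pref T) (b1 b2 : R)
  (A : {set T} * {set T}) (p : T -> R) : Prop :=
  demanded le1 b1 p A.1 /\ demanded le2 b2 p A.2.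
End Defs.

(* Main.v *)
Require Import Defs.
From HB Require Import structures.
From mathcomp Require Import all_boot all_order all_algebra.
From mathcomp Require Import zify lra.
Import Order.TTheory GRing.Theory Num.Theory.
Local Open Scope ring_scope.

Definition mk (l : seq nat) : {set 'I_5} := [set i : 'I_5 | nat_of_ord i \in l].
Definition K := #|{set 'I_5}|.
Definition rk (t : {set 'I_5} -> nat) (S : {set 'I_5}) : nat :=
  ((t S * 6 + #|S|) * K + enum_rank S)%N.
Definition lep (t : {set 'I_5} -> nat) : pref 'I_5 := fun S U => (rk t S <= rk t U)%N.

Lemma card5 (S : {set 'I_5}) : (#|S| <= 5)%N.
Proof. by have := max_card S; rewrite card_ord. Qed.

Lemma rk_lt t S U : (t S < t U)%N -> (rk t S < rk t U)%N.
Proof.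
move=> h; rewrite /rk.
have r1 := ltn_ord (enum_rank S). rewrite -/K in r1 *.
have c := card5 S.
have : ((t S * 6 + #|S|).+1 * K <= (t U * 6 + #|U|) * K)%N.
  by apply: leq_mul => //; nia.
move=> H; apply: leq_trans (leq_addr _ _).
apply: leq_trans H; rewrite mulSn addnC ltn_add2r //.
Qed.

Lemma rk_inj t S U : rk t S = rk t U -> S = U.
Proof.
move=> h; have : (rk t S %% K = rk t U %% K)%N by rewrite h.
rewrite /rk !modnMDl !modn_small ?ltn_ord // => /val_inj; exact: enum_rank_inj.
Qed.

Lemma rk_mono (t : {set 'I_5} -> nat) (ht : forall S U : {set 'I_5}, S \subset U -> (t S <= t U)%N) (S U : {set 'I_5}) :
  S \subset U -> (rk t S <= rk t U)%N.
Proof.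
move=> sSU; have [->|ne] := eqVneq S U; first by [].
have pr : S \proper U by rewrite properEneq ne.
have cl := proper_card pr.
have r1 := ltn_ord (enum_rank S). rewrite -/K in r1 *.
have tl := ht _ _ sSU.
have : ((t S * 6 + #|S|).+1 * K <= (t U * 6 + #|U|) * K)%N.
  by apply: leq_mul => //; nia.
move=> H; rewrite /rk; apply: leq_trans (leq_addr _ _).
apply: leq_trans H; rewrite mulSn addnC leq_add2r; exact: ltnW.
Qed.

Lemma lep_monotone (t : {set 'I_5} -> nat) (ht : forall S U : {set 'I_5}, S \subset U -> (t S <= t U)%N) : monotone_pref (lep t).
Proof.
split; first by move=> S U; rewrite /lep leq_total.
split; first by move=> S U V; rewrite /lep; apply: leq_trans.
by move=> S U; apply: rk_mono.
Qed.

Lemma lep_strict t : strict_pref (lep t).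
Proof.
move=> S U ne; rewrite /spref /lep -!ltnNge.
have : rk t S != rk t U by apply: contra ne => /eqP /rk_inj ->.
case: ltngtP => //.
Qed.

Lemma spref_lt t S U : (t S < t U)%N -> spref (lep t) S U.
Proof. by move=> h; have h2 := rk_lt _ _ _ h; rewrite /spref /lep -ltnNge h2 ltnW. Qed.

Definition S1 := mk [:: 0; 3; 4]%N.
Definition S2 := mk [:: 1; 2]%N.
Definition tier (G1 G2 S0 : {set 'I_5}) (S : {set 'I_5}) : nat :=
  if [|| G1 \subset S, G2 \subset S | S0 \proper S] then 2%N else if S == S0 then 1%N else 0%N.
Definition t1 := tier (mk [:: 0;1;4]%N) (mk [:: 2;3]%N) S1.
Definition t2 := tier (mk [:: 0;2;4]%N) (mk [:: 1;3]%N) S2.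

Lemma tier_mono (G1 G2 S0 S U : {set 'I_5}) : S \subset U -> (tier G1 G2 S0 S <= tier G1 G2 S0 U)%N.
Proof.
move=> sSU; rewrite /tier.
case: ifP => [/or3P [h|h|h]|_].
- by rewrite (subset_trans h sSU).
- by rewrite (subset_trans h sSU) orbT.
- by rewrite (proper_sub_trans h sSU) !orbT.
case: ifP => [/eqP eS|_]; last by [].
subst S; case: (eqVneq S0 U) => [<-|ne]; first by case: ifP.
by rewrite properEneq ne sSU !orbT.
Qed.

Lemma notsub l1 l2 (x : nat) (hx : (x < 5)%N) :
  x \in l1 -> x \notin l2 -> ~~ (mk l1 \subset mk l2).
Proof.
move=> h1 h2; apply/negP => /subsetP /(_ (Ordinal hx)).
by rewrite !inE /= h1 (negbTE h2) => /(_ isT).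
Qed.

Lemma t1S1 : t1 S1 = 1%N.
Proof.
rewrite /t1 /tier (negbTE (@notsub _ _ 1 isT _ _)) // (negbTE (@notsub _ _ 2 isT _ _)) //.
by rewrite properxx eqxx.
Qed.
Lemma t2S2 : t2 S2 = 1%N.
Proof.
rewrite /t2 /tier (negbTE (@notsub _ _ 0 isT _ _)) // (negbTE (@notsub _ _ 3 isT _ _)) //.
by rewrite properxx eqxx.
Qed.
Lemma t1U1 : t1 (mk [:: 0;1;4]%N) = 2%N.
Proof. by rewrite /t1 /tier subxx. Qed.
Lemma t1U2 : t1 (mk [:: 2;3]%N) = 2%N.
Proof. by rewrite /t1 /tier subxx orbT. Qed.
Lemma t2V1 : t2 (mk [:: 0;2;4]%N) = 2%N.
Proof. by rewrite /t2 /tier subxx. Qed.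
Lemma t2V2 : t2 (mk [:: 1;3]%N) = 2%N.
Proof. by rewrite /t2 /tier subxx orbT. Qed.

Lemma price_mk (R : realFieldType) (p : 'I_5 -> R) l :
  price p (mk l) = \sum_(i < 5) (if nat_of_ord i \in l then p i else 0).
Proof. by rewrite /price big_mkcond; apply: eq_bigr => i _; rewrite inE. Qed.

Lemma S2C : S2 = ~: S1.
Proof.
apply/setP => i; rewrite !inE.
by case: i => [[|[|[|[|[|?]]]]] ?].
Qed.

Lemma notsubC (x : nat) (hx : (x < 5)%N) l l' (T : {set 'I_5}) :
  x \in l -> x \in l' -> mk l' \subset T -> ~~ (mk l \subset ~: T).
Proof.
move=> h1 h2 /subsetP sT; apply/negP => /subsetP /(_ (Ordinal hx)).
have := sT (Ordinal hx); rewrite !inE /= h1 h2 => -> //.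
by move=> /(_ isT).
Qed.

Lemma notprop l (T : {set 'I_5}) : ~~ (mk l \subset ~: T) -> ~~ (mk l \proper ~: T).
Proof. by apply: contra => /properP []. Qed.

Lemma key (T : {set 'I_5}) : t1 T = 2%N -> t2 (~: T) = 0%N.
Proof.
move=> h.
have neT : ~: T != S2.
  apply/eqP => e; have eT : T = S1 by rewrite -[T]setCK e S2C setCK.
  by rewrite eT t1S1 in h.
move: h; rewrite /t1 /t2 /tier (negbTE neT).
case: ifP => [H _|_]; last by case: ifP.
case/or3P: H => H.
- rewrite (negbTE (@notsubC 0 isT _ _ _ _ _ H)) // (negbTE (@notsubC 1 isT _ _ _ _ _ H)) //.
  by rewrite (negbTE (notprop _ _ (@notsubC 1 isT _ _ _ _ _ H))).
- rewrite (negbTE (@notsubC 2 isT _ _ _ _ _ H)) // (negbTE (@notsubC 3 isT _ _ _ _ _ H)) //.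
  by rewrite (negbTE (notprop _ _ (@notsubC 2 isT _ _ _ _ _ H))).
- have sT : S1 \subset T by case/properP: H.
  rewrite (negbTE (@notsubC 0 isT _ _ _ _ _ sT)) // (negbTE (@notsubC 3 isT _ _ _ _ _ sT)) //.
  have sC : ~: T \subset S2 by rewrite S2C setCS.
  case: ifP => // P; exfalso; move: P; apply/negP; apply/negP => P.
  by have := proper_sub_trans P sC; rewrite properxx.
Qed.


Theorem mainTheorem4 (R : realFieldType) :
  exists (le1 le2 : pref 'I_5) (A : {set 'I_5} * {set 'I_5}),
    [/\ monotone_pref le1, strict_pref le1,
        monotone_pref le2, strict_pref le2
      & pareto_optimal2 le1 le2 A] /\
    forall b1 b2 : R, 0 < b1 -> 0 < b2 ->
      ~ exists p : 'I_5 -> R, competitive_eq2 le1 le2 b1 b2 A p.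
Proof.
exists (lep t1), (lep t2), (S1, S2); split.
  split; try apply: lep_monotone; try apply: lep_strict; try by move=> *; apply: tier_mono.
  have alloc : allocation2 (S1, S2).
    split; last by rewrite /= S2C setUCr.
    by rewrite /= S2C -setI_eq0 setICr.
  split=> // [[T T2]] [/= dis cov] ne.
  have eT2 : T2 = ~: T.
    apply/setP => i; rewrite inE.
    have c : i \in T :|: T2 by rewrite cov inE.
    case: (boolP (i \in T)) => hi /=; first by rewrite (disjointFr dis hi).
    by move: c; rewrite inE (negbTE hi).
  subst T2.
  have neT : T != S1 by apply/eqP => e; apply: ne; rewrite e S2C.
  rewrite /=.
  have : (t1 T <= 2)%N by rewrite /t1 /tier; case: ifP => //; case: ifP.
  case E : (t1 T) => [|[|[|//]]] _.
  - by left; apply: spref_lt; rewrite E t1S1.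
  - exfalso; move: E; rewrite /t1 /tier; case: ifP => //; rewrite (negbTE neT).
    by [].
  - by right; apply: spref_lt; rewrite key // t2S2.
move=> b1 b2 _ _ [p [[h1 h1'] [h2 h2']]].
have u1 := h1' _ (spref_lt _ _ _ (_ : t1 S1 < t1 (mk [:: 0;1;4]%N))%N).
have u2 := h1' _ (spref_lt _ _ _ (_ : t1 S1 < t1 (mk [:: 2;3]%N))%N).
have v1 := h2' _ (spref_lt _ _ _ (_ : t2 S2 < t2 (mk [:: 0;2;4]%N))%N).
have v2 := h2' _ (spref_lt _ _ _ (_ : t2 S2 < t2 (mk [:: 1;3]%N))%N).
rewrite t1S1 t1U1 t1U2 t2S2 t2V1 t2V2 in u1 u2 v1 v2.
have {u1 u2 v1 v2} := (u1 isT, u2 isT, v1 isT, v2 isT).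
move: h1 h2; rewrite /= /S1 /S2 !price_mk !big_ord_recl !big_ord0 /=.
move=> h1 h2 [[[u1 u2] v1] v2].
lra.
Qed.
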